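(* Let $G$ be a graph, $\ell\ge 1$, and let $B\subseteq V(G)$ be an $(\ell-1)$-edge-leaky forcing set of $G$. If $L$ is a set of $k\ge \ell$ edge leaks, then $|L- B^{[\infty]}_L|\le k-\ell$, where $L-S=\{xy\in L: x\notin S \text{ and } y\notin S\}$ for $S\subseteq V(G)$.
   Context: All graphs are finite, simple and undirected. Zero forcing: a blue vertex $u$ with exactly one white neighbor $w$ may force $w$ (color it blue), written $u\to w$. An edge leak is an edge $xy\in E(G)$ across which no force may be performed (neither $x\to y$ nor $y\to x$). $B$ is an $\ell$-edge-leaky forcing set if for every set $L$ of at most $\ell$ edge leaks, exhaustively applying the forcing rule from initial blue set $B$ without forcing across edges of $L$ colors all of $V(G)$ blue (a $0$-edge-leaky forcing set is a zero forcing set). For a set $L$ of edge leaks, $B^{[\infty]}_L$ denotes the set of blue vertices obtained from $B$ after the forcing rule (respecting the leaks $L$) has been applied exhaustively; this set does not depend on the order of forces. *)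

(* Defs.v *)
From mathcomp Require Import all_boot.
Set Implicit Arguments. Unset Strict Implicit. Unset Printing Implicit Defensive.

(* A finite simple graph: vertex set T (a finType), adjacency relation g,
   assumed symmetric and irreflexive (hypotheses of the theorem). *)

Definition is_edge (T : finType) (g : rel T) (s : {set T}) : Prop :=
  exists x y, g x y /\ s = [set x; y].

Definition leak_set (T : finType) (g : rel T) (L : {set {set T}}) : Prop :=
  forall s, s \in L -> is_edge g s.

Definition can_force (T : finType) (g : rel T) (L : {set {set T}})
  (S : {set T}) (u w : T) : bool :=
  [&& u \in S, w \notin S, g u w,
      [forall v, (g u v && (v != w)) ==> (v \in S)]
    & [set u; w] \notin L].

Definition force_once (T : finType) (g : rel T) (L : {set {set T}})
  (S : {set T}) : {set T} :=
  match [pick p : T * T | can_force g L S p.1 p.2] with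
  | Some p => p.2 |: S
  | None => S
  end.

(* B^[oo]_L : exhaustively apply the forcing rule; at most #|T| forces
   can occur, so iterating #|T| times reaches the terminal set. *)
Definition leaky_closure (T : finType) (g : rel T) (L : {set {set T}})
  (B : {set T}) : {set T} :=
  iter #|T| (force_once g L) B.

Definition edge_leaky_forcing (T : finType) (g : rel T) (l : nat)
  (B : {set T}) : Prop :=
  forall L : {set {set T}}, leak_set g L -> #|L| <= l ->
    leaky_closure g L B = [set: T].

Definition leak_minus (T : finType) (L : {set {set T}}) (S : {set T})
  : {set {set T}} :=
  [set xy in L | [disjoint xy & S]].

(* Main.v *)
Require Import Defs.
From mathcomp Require Import all_boot.
From mathcomp Require Import zify.

Lemma iter_fix (T : finType) (f : {set T} -> {set T}) (X : {set T}) :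
  (forall Y : {set T}, Y \subset f Y) -> f (iter #|T| f X) = iter #|T| f X.
Proof.
move=> finc.
have P : forall n, f (iter n f X) = iter n f X \/ n <= #|iter n f X|.
  elim=> [|n IH]; first by right.
  case: IH => [E|H].
    by left; rewrite /= E E.
  case: (boolP (f (iter n f X) == iter n f X)) => [/eqP E|NE].
    by left; rewrite /= E E.
  right; rewrite /=.
  have : iter n f X \proper f (iter n f X).
    by rewrite properEneq eq_sym NE finc.
  move/proper_card => C; exact: leq_ltn_trans H C.
case: (P #|T|) => // H.
have E : iter #|T| f X = setT.
  by apply/eqP; rewrite eqEcard subsetT cardsT H.
by rewrite E; apply/eqP; rewrite eqEsubset subsetT finc.
Qed.

Lemma force_inc (T : finType) (g : rel T) L (Y : {set T}) :
  Y \subset force_once g L Y.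
Proof.
rewrite /force_once; case: pickP => [p _|_] //; exact: subsetUr.
Qed.

Theorem lemma2p2 (T : finType) (g : rel T)
  (g_sym : symmetric g) (g_irr : irreflexive g)
  (l k : nat) (B : {set T}) (L : {set {set T}}) :
  1 <= l ->
  edge_leaky_forcing g (l - 1) B ->
  leak_set g L -> #|L| = k -> l <= k ->
  #|leak_minus L (leaky_closure g L B)| <= k - l.
Proof.
move=> l1 HB HL HK lk.
set S := leaky_closure g L B.
set M := leak_minus L S.
case: (leqP #|M| (k - l)) => // Hlt.
have MsubL : M \subset L by apply/subsetP => x; rewrite inE => /andP[].
set L' := L :\: M.
have cL' : #|L'| <= l - 1.
  have := cardsD L M; rewrite (setIidPr MsubL) /L' => ->; lia.
have lsL' : leak_set g L'.
  by move=> s; rewrite inE => /andP[_ /HL].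
have fixS : force_once g L S = S by apply: iter_fix => Y; exact: force_inc.
have noforce : forall u w, ~~ can_force g L S u w.
  move=> u w; apply/negP => cf.
  move: fixS; rewrite /force_once; case: pickP => [p Hp|Hn].
    move=> E; move: Hp => /and5P[_ Hw _ _ _].
    by have := setU11 p.2 S; rewrite E (negbTE Hw).
  by move: (Hn (u, w)); rewrite cf.
have sub : forall n, iter n (force_once g L') B \subset S.
  elim=> [|n IH] /=.
    have := force_inc; rewrite /S /leaky_closure.
    elim: #|T| => [|m IHm] Hi //=.
    apply: subset_trans (IHm Hi) _; exact: force_inc.
  rewrite {1}/force_once; case: pickP => [[u w] /= Hp|_] //.
  rewrite subUset IH andbT sub1set.
  apply/negPn/negP => wS.
  move: Hp => /and5P[uX wX guw Hall HL'].
  have uS : u \in S by apply: (subsetP IH).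
  move/negP: (noforce u w); apply.
  rewrite /can_force uS wS guw /=.
  apply/andP; split.
    apply/forallP => v; apply/implyP => Hv.
    apply: (subsetP IH); exact: (implyP (forallP Hall v) Hv).
  apply/negP => uwL; move/negP: HL'; apply.
  rewrite inE uwL andbT inE uwL /=.
  apply/negP => /pred0P /(_ u); rewrite /= !inE eqxx uS //.
have ST : S = setT.
  apply/eqP; rewrite eqEsubset subsetT /=.
  by rewrite -(HB L' lsL' cL'); apply: sub.
have M0 : M = set0.
  apply/setP => s; rewrite !inE; apply/negP => /andP[sL].
  have [x [y [_ ->]]] := HL s sL.
  rewrite ST => /pred0P /(_ x); by rewrite /= !inE eqxx.
by move: Hlt; rewrite M0 cards0.
Qed.
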